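(* Assume $\beta>0$, $\bar c>0$ and $0<\bar u<\bar c$, $\bar v\in\mathbb{R}$. Let $\Omega_1=(-\infty,0)\times\mathbb{R}$, $\Omega_2=(0,\infty)\times\mathbb{R}$, $\Gamma=\{x=0\}$, $\mathbf n_1=(1,0)$, $\mathbf n_2=(-1,0)$ the outward normals. Let $g$ be given and let $Q$ solve $\mathcal L\mathcal G Q=g$ in $\mathbb{R}^2$. Consider the following iteration. Choose initial values $Q^{1,0}$ on $\Omega_1$, $Q^{2,0}$ on $\Omega_2$ with $\mathcal G Q^{1,0}=\mathcal G Q^{2,0}$ on $\Gamma$; given $(Q^{1,k},Q^{2,k})$: (Correction step) with $\gamma^k=-\tfrac12\big[\mathcal A\nabla\mathcal G Q^{1,k}\cdot\mathbf n_1+\mathcal A\nabla\mathcal G Q^{2,k}\cdot\mathbf n_2\big]$ on $\Gamma$, solve $\mathcal L\mathcal G\tilde Q^{1,k}=0$ in $\Omega_1$, $(\mathcal A\nabla-\tfrac12\mathbf a)\mathcal G\tilde Q^{1,k}\cdot\mathbf n_1=\gamma^k$ on $\Gamma$; and $\mathcal L\mathcal G\tilde Q^{2,k}=0$ in $\Omega_2$, $(\mathcal A\nabla-\tfrac12\mathbf a)\mathcal G\tilde Q^{2,k}\cdot\mathbf n_2=\gamma^k$ and $\tilde Q^{2,k}=0$ on $\Gamma$. (Update step) with $\delta^k=\tfrac12\big[\mathcal G\tilde Q^{1,k}+\mathcal G\tilde Q^{2,k}\big]$ on $\Gamma$, solve $\mathcal L\mathcal G Q^{1,k+1}=g$ in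 $\Omega_1$, $\mathcal G Q^{1,k+1}=\mathcal G Q^{1,k}+\delta^k$ on $\Gamma$; and $\mathcal L\mathcal G Q^{2,k+1}=g$ in $\Omega_2$, $\mathcal G Q^{2,k+1}=\mathcal G Q^{2,k}+\delta^k$ and $Q^{2,k+1}=Q^{1,k}+\tilde Q^{1,k}$ on $\Gamma$. Then the algorithm converges in two iterations: $Q^{1,2}=Q|_{\Omega_1}$ and $Q^{2,2}=Q|_{\Omega_2}$.
   Context: $\mathcal G=\beta+\bar u\partial_x+\bar v\partial_y$ and $\mathcal L=\beta^2+2\bar u\bar v\partial_{xy}+2\beta(\bar u\partial_x+\bar v\partial_y)-(\bar c^2-\bar v^2)\partial_{yy}-(\bar c^2-\bar u^2)\partial_{xx}$, equivalently $\mathcal L=-\mathrm{div}(\mathcal A\nabla)+\mathbf a\cdot\nabla+\beta^2$ with $\mathcal A=\begin{pmatrix}\bar c^2-\bar u^2&-\bar u\bar v\\-\bar u\bar v&\bar c^2-\bar v^2\end{pmatrix}$ and $\mathbf a=2\beta(\bar u,\bar v)$. All problems (local and global) are understood in the Fourier sense in $y$: solutions are functions whose partial Fourier transform $\hat e(x,\xi)=\int_{\mathbb R}e(x,y)e^{-i\xi y}\,dy$ is, for each $\xi$, bounded in $x$ on the relevant domain (as $x\to-\infty$ in $\Omega_1$, as $x\to+\infty$ in $\Omega_2$). *)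

(* Defs.v *)
From Stdlib Require Import Reals.
From Coquelicot Require Import Coquelicot.
Open Scope R_scope.

(* Fourier-sense representation: a function e(x,y) is represented by its
   partial Fourier transform in y, ehat : R -> R -> C, ehat xi x = \hat e(x,xi).
   Under this transform d/dy becomes multiplication by (i xi). *)

Definition dn (n : nat) (f : R -> C) (x : R) : C :=
  (Derive_n (fun t => Re (f t)) n x, Derive_n (fun t => Im (f t)) n x).

Definition C3 (f : R -> C) : Prop :=
  forall (x : R) (n : nat), (n <= 3)%nat ->
    ex_derive_n (fun t => Re (f t)) n x /\ ex_derive_n (fun t => Im (f t)) n x.

Definition bounded_on (D : R -> Prop) (f : R -> C) : Prop :=
  exists M : R, forall x, D x -> Cmod (f x) <= M.

Definition Omega1 (x : R) : Prop := x < 0.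
Definition Omega2 (x : R) : Prop := 0 < x.

Definition iy (xi : R) : C := Cmult Ci (RtoC xi).

Section Ops.
Variables (beta cb ub vb : R).

(* G = beta + ub d/dx + vb d/dy, in Fourier variables *)
Definition Gop (xi : R) (f : R -> C) : R -> C := fun x =>
  Cplus (Cplus (Cmult (RtoC beta) (f x)) (Cmult (RtoC ub) (dn 1 f x)))
        (Cmult (RtoC vb) (Cmult (iy xi) (f x))).

(* L = beta^2 + 2 ub vb d_xy + 2 beta (ub d_x + vb d_y)
       - (cb^2 - vb^2) d_yy - (cb^2 - ub^2) d_xx, in Fourier variables *)
Definition Lop (xi : R) (w : R -> C) : R -> C := fun x =>
  Cplus (Cplus (Cplus (Cplus
    (Cmult (RtoC (beta ^ 2)) (w x))
    (Cmult (RtoC (2 * ub * vb)) (Cmult (iy xi) (dn 1 w x))))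
    (Cmult (RtoC (2 * beta))
       (Cplus (Cmult (RtoC ub) (dn 1 w x)) (Cmult (RtoC vb) (Cmult (iy xi) (w x))))))
    (Copp (Cmult (RtoC (cb ^ 2 - vb ^ 2)) (Cmult (iy xi) (Cmult (iy xi) (w x))))))
    (Copp (Cmult (RtoC (cb ^ 2 - ub ^ 2)) (dn 2 w x))).

Definition LGop (xi : R) (f : R -> C) : R -> C := Lop xi (Gop xi f).

(* (A grad w) . n  with A = [[cb^2-ub^2, -ub vb], [-ub vb, cb^2-vb^2]],
   n = (nx, ny) *)
Definition Aflux (xi nx ny : R) (w : R -> C) (x : R) : C :=
  let wx := dn 1 w x in
  let wy := Cmult (iy xi) (w x) in
  Cplus
    (Cmult (RtoC nx) (Cplus (Cmult (RtoC (cb ^ 2 - ub ^ 2)) wx) (Cmult (RtoC (- (ub * vb))) wy)))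
    (Cmult (RtoC ny) (Cplus (Cmult (RtoC (- (ub * vb))) wx) (Cmult (RtoC (cb ^ 2 - vb ^ 2)) wy))).

(* ((A grad - 1/2 a) w) . n  with a = 2 beta (ub, vb) *)
Definition Bflux (xi nx ny : R) (w : R -> C) (x : R) : C :=
  Cplus (Aflux xi nx ny w x)
        (Copp (Cmult (RtoC (/2 * (2 * beta * (ub * nx + vb * ny)))) (w x))).

End Ops.

(* Main.v *)
Require Import Defs.
From Stdlib Require Import Reals Lra Lia.
From Coquelicot Require Import Coquelicot.
Open Scope R_scope.

Ltac rring := match goal with |- @eq _ ?a ?b => change (@eq R a b) end; unfold Re, Im; simpl; ring.

Lemma isd_lin (F G : R -> R) a b x dF dG :
  is_derive F x dF -> is_derive G x dG ->
  is_derive (fun t => a * F t + b * G t) x (a * dF + b * dG).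
Proof.
  intros HF HG.
  apply (is_derive_plus (fun t => a * F t) (fun t => b * G t)).
  - now apply is_derive_scal.
  - now apply is_derive_scal.
Qed.

Lemma isd_mul (F G : R -> R) x dF dG :
  is_derive F x dF -> is_derive G x dG ->
  is_derive (fun t => F t * G t) x (dF * G x + F x * dG).
Proof.
  intros HF HG.
  apply (is_derive_mult F G x dF dG HF HG). intros; apply Rmult_comm.
Qed.

Definition cder (f : R -> C) (x : R) (l : C) : Prop :=
  is_derive (fun t => Re (f t)) x (Re l) /\ is_derive (fun t => Im (f t)) x (Im l).

Definition Cd (f : R -> C) (x : R) : Prop :=
  ex_derive (fun t => Re (f t)) x /\ ex_derive (fun t => Im (f t)) x.

Lemma cder_dn1 f x l : cder f x l -> dn 1 f x = l.
Proof.
  intros [H1 H2]. unfold dn. simpl.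
  assert (E1 : Derive (fun t => Re (f t)) x = Re l) by (apply is_derive_unique; exact H1).
  assert (E2 : Derive (fun t => Im (f t)) x = Im l) by (apply is_derive_unique; exact H2).
  rewrite E1, E2. destruct l; reflexivity.
Qed.

Lemma Cd_cder f x : Cd f x -> cder f x (dn 1 f x).
Proof.
  intros [H1 H2]. split; simpl; now apply Derive_correct.
Qed.

Lemma cder_Cd f x l : cder f x l -> Cd f x.
Proof. intros [H1 H2]; split; eexists; eauto. Qed.

Lemma cder_ext f g x l : (forall t, f t = g t) -> cder f x l -> cder g x l.
Proof.
  intros E [H1 H2]; split.
  - eapply is_derive_ext; [|exact H1]. intros; simpl; now rewrite E.
  - eapply is_derive_ext; [|exact H2]. intros; simpl; now rewrite E.
Qed.

Lemma isd_eq (F : R -> R) x l l' : is_derive F x l -> l = l' -> is_derive F x l'.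
Proof. intros H E; now subst. Qed.

Lemma isd_lin4 (F1 F2 F3 F4 : R -> R) a b c d x d1 d2 d3 d4 :
  is_derive F1 x d1 -> is_derive F2 x d2 -> is_derive F3 x d3 -> is_derive F4 x d4 ->
  is_derive (fun t => a * F1 t + b * F2 t + (c * F3 t + d * F4 t)) x
     (a * d1 + b * d2 + (c * d3 + d * d4)).
Proof.
  intros H1 H2 H3 H4.
  apply (is_derive_plus (fun t => a * F1 t + b * F2 t) (fun t => c * F3 t + d * F4 t));
  now apply isd_lin.
Qed.

Lemma cder_lin f g x lf lg (a b : C) :
  cder f x lf -> cder g x lg ->
  cder (fun t => Cplus (Cmult a (f t)) (Cmult b (g t))) x
       (Cplus (Cmult a lf) (Cmult b lg)).
Proof.
  destruct a as [ar ai], b as [br bi], lf as [lfr lfi], lg as [lgr lgi].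
  intros [F1 F2] [G1 G2]; simpl in *. split; simpl.
  - eapply is_derive_ext; [| eapply isd_eq; [apply (isd_lin4 _ _ _ _ ar (-ai) br (-bi) x _ _ _ _ F1 F2 G1 G2)|]].
    + intros t; unfold Re, Im; simpl; ring.
    + rring.
  - eapply is_derive_ext; [| eapply isd_eq; [apply (isd_lin4 _ _ _ _ ai ar bi br x _ _ _ _ F1 F2 G1 G2)|]].
    + intros t; unfold Re, Im; simpl; ring.
    + rring.
Qed.

Lemma cder_mul f g x lf lg :
  cder f x lf -> cder g x lg ->
  cder (fun t => Cmult (f t) (g t)) x (Cplus (Cmult lf (g x)) (Cmult (f x) lg)).
Proof.
  destruct lf as [lfr lfi], lg as [lgr lgi].
  intros [F1 F2] [G1 G2]; simpl in *.
  pose proof (isd_mul _ _ _ _ _ F1 G1) as M1.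
  pose proof (isd_mul _ _ _ _ _ F2 G2) as M2.
  pose proof (isd_mul _ _ _ _ _ F1 G2) as M3.
  pose proof (isd_mul _ _ _ _ _ F2 G1) as M4.
  split; simpl.
  - eapply is_derive_ext; [| eapply isd_eq; [apply (isd_lin _ _ 1 (-1) x _ _ M1 M2)|]].
    + intros t; unfold Re, Im; simpl; ring.
    + rring.
  - eapply is_derive_ext; [| eapply isd_eq; [apply (isd_lin _ _ 1 1 x _ _ M3 M4)|]].
    + intros t; unfold Re, Im; simpl; ring.
    + rring.
Qed.

Definition cexp (m : C) (x : R) : C :=
  (exp (Re m * x) * cos (Im m * x), exp (Re m * x) * sin (Im m * x)).

Lemma cder_cexp m x : cder (cexp m) x (Cmult m (cexp m x)).
Proof.
  destruct m as [a b]. unfold cexp; simpl. split; simpl.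
  - eapply isd_eq. apply isd_mul.
    + apply (is_derive_comp exp (fun t => a * t)). apply is_derive_exp.
      eapply isd_eq. apply is_derive_scal. apply is_derive_id. reflexivity.
    + apply (is_derive_comp cos (fun t => b * t)). apply is_derive_cos.
      eapply isd_eq. apply is_derive_scal. apply is_derive_id. reflexivity.
    + unfold scal, one; simpl. unfold mult; simpl. rring.
  - eapply isd_eq. apply isd_mul.
    + apply (is_derive_comp exp (fun t => a * t)). apply is_derive_exp.
      eapply isd_eq. apply is_derive_scal. apply is_derive_id. reflexivity.
    + apply (is_derive_comp sin (fun t => b * t)). apply is_derive_sin.
      eapply isd_eq. apply is_derive_scal. apply is_derive_id. reflexivity.
    + unfold scal, one; simpl. unfold mult; simpl. rring.
Qed.

Lemma cder_eq f x l l' : cder f x l -> l = l' -> cder f x l'.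
Proof. intros H E; now subst. Qed.

Lemma cder_plus f g x lf lg : cder f x lf -> cder g x lg ->
  cder (fun t => Cplus (f t) (g t)) x (Cplus lf lg).
Proof.
  intros Hf Hg. eapply cder_ext; [|eapply cder_eq; [apply (cder_lin f g x lf lg 1 1 Hf Hg)|]].
  - intros; simpl. apply injective_projections; simpl; ring.
  - apply injective_projections; simpl; ring.
Qed.

Lemma cder_scal (a : C) f x lf : cder f x lf ->
  cder (fun t => Cmult a (f t)) x (Cmult a lf).
Proof.
  intros Hf. eapply cder_ext; [|eapply cder_eq; [apply (cder_lin f f x lf lf a 0 Hf Hf)|]].
  - intros; simpl. apply injective_projections; simpl; ring.
  - apply injective_projections; simpl; ring.
Qed.

Lemma cder_const (a : C) x : cder (fun _ => a) x 0.
Proof. split; simpl; apply (is_derive_const (K:=R_AbsRing) (V:=R_NormedModule)). Qed.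

Lemma dn_ext f g n x : (forall t, f t = g t) -> dn n f x = dn n g x.
Proof.
  intros E. unfold dn. f_equal; apply Derive_n_ext; intros; now rewrite E.
Qed.

Lemma Cd_ext f g x : (forall t, f t = g t) -> Cd f x -> Cd g x.
Proof.
  intros E [H1 H2]; split.
  - eapply ex_derive_ext; [|exact H1]; intros; simpl; now rewrite E.
  - eapply ex_derive_ext; [|exact H2]; intros; simpl; now rewrite E.
Qed.

Definition CC3 (f : R -> C) : Prop :=
  forall t, Cd f t /\ Cd (dn 1 f) t /\ Cd (dn 2 f) t.

Lemma C3_CC3 f : C3 f -> CC3 f.
Proof.
  intros H t.
  destruct (H t 1%nat ltac:(lia)) as [A1 B1].
  destruct (H t 2%nat ltac:(lia)) as [A2 B2].
  destruct (H t 3%nat ltac:(lia)) as [A3 B3].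
  split; [|split]; split; assumption.
Qed.

Lemma dn11 f x : dn 1 (dn 1 f) x = dn 2 f x.
Proof. reflexivity. Qed.
Lemma dn12 f x : dn 1 (dn 2 f) x = dn 3 f x.
Proof. reflexivity. Qed.

Open Scope C_scope.

Definition cmb (a0 a1 a2 a3 : C) (E : R -> C) (t : R) : C :=
  a0 * E t + a1 * dn 1 E t + a2 * dn 2 E t + a3 * dn 3 E t.

Definition Dl (c : C) (F : R -> C) (t : R) : C := dn 1 F t - c * F t.

Lemma cder_cmb E a0 a1 a2 t : CC3 E ->
  cder (cmb a0 a1 a2 0 E) t (a0 * dn 1 E t + a1 * dn 2 E t + a2 * dn 3 E t).
Proof.
  intros H. destruct (H t) as [H0 [H1 H2]].
  apply Cd_cder in H0, H1, H2. rewrite dn11 in H1. rewrite dn12 in H2.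
  eapply cder_ext; [|eapply cder_eq; [
     apply (cder_plus _ _ _ _ _ (cder_plus _ _ _ _ _ (cder_scal a0 _ _ _ H0) (cder_scal a1 _ _ _ H1))
              (cder_plus _ _ _ _ _ (cder_scal a2 _ _ _ H2) (cder_const 0 t)))|]].
  - intros s; unfold cmb. ring.
  - ring.
Qed.

Lemma Cd_cmb E a0 a1 a2 t : CC3 E -> Cd (cmb a0 a1 a2 0 E) t.
Proof. intros H; eapply cder_Cd; now apply cder_cmb. Qed.

Lemma Dl_ext c F G x : (forall t, F t = G t) -> Dl c F x = Dl c G x.
Proof. intros E; unfold Dl. rewrite (dn_ext F G 1 x E), E. reflexivity. Qed.

Lemma Dl_cmb E c a0 a1 a2 t : CC3 E ->
  Dl c (cmb a0 a1 a2 0 E) t = cmb (- c * a0) (a0 - c * a1) (a1 - c * a2) a2 E t.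
Proof.
  intros H. unfold Dl. rewrite (cder_dn1 _ _ _ (cder_cmb E a0 a1 a2 t H)).
  unfold cmb. ring.
Qed.

Lemma cmb_E E t : E t = cmb 1 0 0 0 E t.
Proof. unfold cmb. ring. Qed.

Close Scope C_scope.
Open Scope R_scope.

Definition betw (x t : R) : Prop := (0 < t < x) \/ (x < t < 0).

Lemma const_real (F dF : R -> R) (x : R) :
  (forall t, is_derive F t (dF t)) -> (forall t, betw x t -> dF t = 0) -> F x = F 0.
Proof.
  intros HD HZ.
  destruct (Rtotal_order x 0) as [Hx|[Hx|Hx]].
  - destruct (MVT_cor2 F dF x 0 Hx) as [c [Hc1 Hc2]].
    + intros c _. apply is_derive_Reals, HD.
    + rewrite HZ in Hc1 by (right; lra). lra.
  - now subst.
  - destruct (MVT_cor2 F dF 0 x Hx) as [c [Hc1 Hc2]].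
    + intros c _. apply is_derive_Reals, HD.
    + rewrite HZ in Hc1 by (left; lra). lra.
Qed.

Lemma const_betw (phi dphi : R -> C) x :
  (forall t, cder phi t (dphi t)) -> (forall t, betw x t -> dphi t = RtoC 0) -> phi x = phi 0.
Proof.
  intros HD HZ. apply injective_projections.
  - apply (const_real (fun t => Re (phi t)) (fun t => Re (dphi t))).
    + intros t; apply HD.
    + intros t Ht; rewrite HZ by auto; reflexivity.
  - apply (const_real (fun t => Im (phi t)) (fun t => Im (dphi t))).
    + intros t; apply HD.
    + intros t Ht; rewrite HZ by auto; reflexivity.
Qed.

Lemma cont_zero (F : R -> R) (s : R) : s <> 0 ->
  continuity_pt F 0 -> (forall t, 0 < s * t -> F t = 0) -> F 0 = 0.
Proof.
  intros Hs HC HZ.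
  destruct (Req_dec (F 0) 0) as [E|NE]; [exact E|exfalso].
  unfold continuity_pt, continue_in, limit1_in, limit_in in HC.
  destruct (HC (Rabs (F 0)) ltac:(apply Rabs_pos_lt; exact NE)) as [alp [Halp H]].
  set (t := s / (Rabs s) * (alp / 2)).
  assert (Hsa : 0 < Rabs s) by (apply Rabs_pos_lt; auto).
  assert (Ht1 : 0 < s * t).
  { unfold t. replace (s * (s / Rabs s * (alp / 2))) with ((s*s) / Rabs s * (alp/2)) by (field; lra).
    apply Rmult_lt_0_compat; [|lra]. apply Rdiv_lt_0_compat; auto. nra. }
  assert (Ht2 : Rabs t = alp / 2).
  { unfold t. rewrite Rabs_mult, Rabs_div by lra. rewrite Rabs_Rabsolu.
    rewrite (Rabs_right (alp/2)) by lra. field. lra. }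
  specialize (H t). simpl in H. unfold R_dist, D_x, no_cond in H.
  rewrite HZ in H by exact Ht1.
  assert (t <> 0) by (intro E; rewrite E in Ht1; lra).
  rewrite Rminus_0_r, Rminus_0_l, Rabs_Ropp in H.
  assert (Rabs (F 0) < Rabs (F 0)) by (apply H; split; [split; [exact I|auto]|lra]). lra.
Qed.

Lemma cder_cont F x l : is_derive F x l -> continuity_pt F x.
Proof.
  intros H. apply is_derive_Reals in H.
  apply derivable_continuous_pt. exists l. exact H.
Qed.

Lemma cont_zero_C (h : R -> C) (s : R) l : s <> 0 ->
  cder h 0 l -> (forall t, 0 < s * t -> h t = RtoC 0) -> h 0 = RtoC 0.
Proof.
  intros Hs [H1 H2] HZ. apply injective_projections; simpl.
  - apply (cont_zero (fun t => Re (h t)) s Hs (cder_cont _ _ _ H1)).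
    intros t Ht; rewrite HZ; auto.
  - apply (cont_zero (fun t => Im (h t)) s Hs (cder_cont _ _ _ H2)).
    intros t Ht; rewrite HZ; auto.
Qed.

Lemma cexp_inv m x : Cmult (cexp m x) (cexp (Copp m) x) = RtoC 1.
Proof.
  destruct m as [a b]; unfold cexp; simpl.
  replace (- a * x) with (- (a * x)) by ring.
  replace (- b * x) with (- (b * x)) by ring.
  rewrite cos_neg, sin_neg, exp_Ropp.
  pose proof (exp_pos (a * x)). pose proof (sin2_cos2 (b * x)). unfold Rsqr in *.
  apply injective_projections; simpl; field_simplify; try lra; nra.
Qed.

Lemma cexp_0 m : cexp m 0 = RtoC 1.
Proof.
  unfold cexp. rewrite !Rmult_0_r, exp_0, cos_0, sin_0.
  apply injective_projections; simpl; ring.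
Qed.

Lemma cder_id x : cder (fun t => RtoC t) x (RtoC 1).
Proof.
  split; simpl.
  - apply (is_derive_id (K:=R_AbsRing)).
  - apply (is_derive_const (K:=R_AbsRing) (V:=R_NormedModule)).
Qed.

Open Scope C_scope.

Lemma Hom1 f m x : (forall t, Cd f t) -> (forall t, betw x t -> Dl m f t = 0) ->
  f x = f 0 * cexp m x.
Proof.
  intros HC HZ.
  assert (E : f x * cexp (- m) x = f 0 * cexp (- m) 0).
  { apply (const_betw (fun t => f t * cexp (- m) t)
                      (fun t => cexp (- m) t * Dl m f t)).
    - intros t. eapply cder_eq. apply cder_mul. apply Cd_cder, HC. apply cder_cexp.
      unfold Dl. ring.
    - intros t Ht. rewrite HZ by auto. ring. }
  rewrite cexp_0 in E.
  transitivity (f x * (cexp (- m) x * cexp m x)).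
  - rewrite Cmult_comm with (x := cexp (- m) x), cexp_inv. ring.
  - rewrite Cmult_assoc, E. ring.
Qed.

Lemma Aff1 f m c x : (forall t, Cd f t) -> (forall t, betw x t -> Dl m f t = c * cexp m t) ->
  f x = (f 0 + c * x) * cexp m x.
Proof.
  intros HC HZ.
  assert (E : f x * cexp (- m) x - c * x = f 0 * cexp (- m) 0 - c * 0).
  { apply (const_betw (fun t => f t * cexp (- m) t - c * t)
                      (fun t => cexp (- m) t * Dl m f t - c)).
    - intros t.
      assert (M := cder_mul _ _ t _ _ (Cd_cder _ _ (HC t)) (cder_cexp (- m) t)).
      assert (L := cder_lin _ _ t _ _ 1 (- c) M (cder_id t)).
      eapply cder_eq. eapply cder_ext. 2: exact L.
      intros s; simpl. ring.
      unfold Dl. ring.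
    - intros t Ht. rewrite HZ by auto.
      rewrite Cmult_comm with (x := c), Cmult_assoc, Cmult_comm with (x := cexp (- m) t), cexp_inv. ring. }
  rewrite cexp_0 in E.
  transitivity (f x * (cexp (- m) x * cexp m x)).
  - rewrite Cmult_comm with (x := cexp (- m) x), cexp_inv. ring.
  - rewrite Cmult_assoc.
    replace (f x * cexp (- m) x) with (f 0 + c * x) by (rewrite <- (Cplus_0_r (f 0 + c * x)); 
       replace (f 0 + c * x + 0) with (f 0 * 1 - c * 0 + c * x) by ring; rewrite <- E; ring).
    reflexivity.
Qed.

Close Scope C_scope.
Open Scope R_scope.

Lemma cmod_cexp m x : Cmod (cexp m x) = exp (Re m * x).
Proof.
  unfold Cmod, cexp.
  pose proof (sin2_cos2 (Im m * x)). unfold Rsqr in H.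
  match goal with |- sqrt ?a = _ => replace a with (exp (Re m * x) * exp (Re m * x)) by (simpl; nra) end.
  apply sqrt_square. left; apply exp_pos.
Qed.

Lemma cexp_add_x m x y : cexp m (x + y) = Cmult (cexp m x) (cexp m y).
Proof.
  unfold cexp. rewrite !Rmult_plus_distr_l, exp_plus, cos_plus, sin_plus.
  apply injective_projections; simpl; ring.
Qed.

Lemma cexp_add_m a b x : cexp (Cplus a b) x = Cmult (cexp a x) (cexp b x).
Proof.
  unfold cexp; simpl. rewrite !Rmult_plus_distr_r, exp_plus, cos_plus, sin_plus.
  unfold Re, Im; apply injective_projections; simpl; ring.
Qed.

Lemma exp_big u M : 0 < u -> exists K, 0 < K /\ u * exp K > M.
Proof.
  intros Hu. exists (Rabs M / u + 1). split.
  - pose proof (Rabs_pos M). assert (0 <= Rabs M / u) by (apply Rdiv_le_0_compat; lra). lra.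
  - pose proof (exp_ineq1 (Rabs M / u + 1)).
    assert (0 <= Rabs M / u) by (apply Rdiv_le_0_compat; [apply Rabs_pos|lra]).
    assert (Rabs M / u + 1 <> 0) by lra.
    specialize (H H1).
    assert (u * (Rabs M / u) = Rabs M) by (field; lra).
    pose proof (Rle_abs M). nra.
Qed.

Open Scope C_scope.

Lemma single_neg (m p : C) (M : R) : (Re m < 0)%R ->
  (forall x, (x < 0)%R -> (Cmod (p * cexp m x) <= M)%R) -> p = 0.
Proof.
  intros Hm HB. destruct (Req_dec (Cmod p) 0) as [E|NE]; [now apply Cmod_eq_0|exfalso].
  assert (Hp : (0 < Cmod p)%R) by (pose proof (Cmod_ge_0 p); lra).
  destruct (exp_big _ M Hp) as [K [HK HE]].
  assert (Hx : (K / Re m < 0)%R) by (apply Rdiv_pos_neg; lra).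
  specialize (HB _ Hx). rewrite Cmod_mult, cmod_cexp in HB.
  replace (Re m * (K / Re m))%R with K in HB by (field; lra). lra.
Qed.

Lemma Cmult_eq0 (p d : C) : p * d = 0 -> d <> 0 -> p = 0.
Proof.
  intros H Hd. replace p with (p * d / d) by (field; auto). rewrite H. field; auto.
Qed.

Lemma cexp_ne1 (d : C) : d <> 0 -> exists T, (0 < T)%R /\ cexp d T <> 1.
Proof.
  intros Hd. destruct d as [a b].
  destruct (Req_dec a 0) as [Ha|Ha].
  - subst a. assert (Hb : b <> 0%R) by (intro; subst; apply Hd; reflexivity).
    exists (PI / Rabs b)%R. split.
    + apply Rdiv_lt_0_compat; [apply PI_RGT_0|apply Rabs_pos_lt; auto].
    + intro E. apply (f_equal fst) in E. unfold cexp in E; simpl in E.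
      rewrite Rmult_0_l, exp_0, Rmult_1_l in E.
      destruct (Rle_or_lt 0 b) as [Hb'|Hb'].
      * rewrite Rabs_right in E by lra. replace (b * (PI / b))%R with PI in E by (field; lra).
        rewrite cos_PI in E. lra.
      * rewrite Rabs_left in E by lra. replace (b * (PI / - b))%R with (- PI)%R in E by (field; lra).
        rewrite cos_neg, cos_PI in E. lra.
  - exists 1%R. split; [lra|]. intro E. apply (f_equal Cmod) in E.
    rewrite cmod_cexp, Cmod_1 in E. simpl in E. rewrite Rmult_1_r in E.
    destruct (Rlt_or_le 0 a) as [H|H].
    + pose proof (exp_ineq1 a Ha). lra.
    + assert (a < 0)%R by lra. pose proof (exp_increasing a 0 H0). rewrite exp_0 in H1. lra.
Qed.

Lemma cexp_opp_x m x : cexp m (- x) = cexp (- m) x.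
Proof.
  unfold cexp, Re, Im; simpl. f_equal; f_equal; f_equal; ring.
Qed.

Lemma two_neg (m1 m2 p q : C) (M : R) : m1 <> m2 -> (Re m1 < 0)%R -> (Re m2 < 0)%R ->
  (forall x, (x < 0)%R -> (Cmod (p * cexp m1 x + q * cexp m2 x) <= M)%R) -> p = 0 /\ q = 0.
Proof.
  intros Hne H1 H2 HB.
  assert (Hd : m2 - m1 <> 0) by (intro E; apply Hne; replace m2 with (m2 - m1 + m1) by ring; rewrite E; ring).
  destruct (cexp_ne1 _ Hd) as [T [HT HE]].
  set (k := cexp (- m1) T - cexp (- m2) T).
  assert (Hk : k <> 0).
  { unfold k. intro E. apply HE.
    replace (- m1) with (- m2 + (m2 - m1)) in E by ring.
    rewrite cexp_add_m in E.
    assert (E2 : (cexp (m2 - m1) T - 1) * cexp (- m2) T = 0).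
    { rewrite <- E. ring. }
    apply Cmult_eq0 in E2.
    - replace (cexp (m2 - m1) T) with (cexp (m2 - m1) T - 1 + 1) by ring. rewrite E2. ring.
    - intro E3. apply (f_equal Cmod) in E3. rewrite cmod_cexp, Cmod_0 in E3.
      pose proof (exp_pos (Re (- m2) * T)). lra. }
  assert (Hp : p * k = 0).
  { apply (single_neg m1 _ (M + Cmod (cexp (- m2) T) * M)); auto.
    intros x Hx.
    replace (p * k * cexp m1 x) with
      ((p * cexp m1 (x + - T) + q * cexp m2 (x + - T)) - cexp (- m2) T * (p * cexp m1 x + q * cexp m2 x)).
    - eapply Rle_trans. apply Cmod_triangle. rewrite Cmod_opp, Cmod_mult.
      pose proof (Cmod_ge_0 (cexp (- m2) T)).
      pose proof (HB x Hx). pose proof (HB (x + - T)%R ltac:(lra)). nra.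
    - rewrite !cexp_add_x, !cexp_opp_x. unfold k. ring. }
  apply Cmult_eq0 in Hp; auto. subst p. split; auto.
  apply (single_neg m2 _ M); auto. intros x Hx.
  replace (q * cexp m2 x) with (0 * cexp m1 x + q * cexp m2 x) by ring. auto.
Qed.

Lemma affine_neg (m p q : C) (M : R) : (Re m < 0)%R ->
  (forall x, (x < 0)%R -> (Cmod ((p + q * x) * cexp m x) <= M)%R) -> p = 0 /\ q = 0.
Proof.
  intros Hm HB.
  assert (Hq : - q = 0).
  { apply (single_neg m _ (Cmod (cexp m 1) * M + M)); auto.
    intros x Hx.
    replace (- q * cexp m x) with
      (cexp m 1 * ((p + q * (x + - 1)%R) * cexp m (x + - 1)) - (p + q * x) * cexp m x).
    - eapply Rle_trans. apply Cmod_triangle. rewrite Cmod_opp, !Cmod_mult.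
      pose proof (Cmod_ge_0 (cexp m 1)).
      pose proof (HB x Hx). pose proof (HB (x + - 1)%R ltac:(lra)).
      rewrite Cmod_mult in H0, H1. pose proof (Rmult_le_compat_l _ _ _ H H1). lra.
    - rewrite cexp_add_x.
      assert (E1 : cexp m 1 * cexp m (- 1) = 1).
      { replace (-1)%R with (- (1))%R by ring. rewrite cexp_opp_x. apply cexp_inv. }
      replace (RtoC (x + - 1)) with (RtoC x - 1) by (apply injective_projections; simpl; ring).
      transitivity ((p + q * x - q) * cexp m x * (cexp m 1 * cexp m (- 1)) - (p + q * x) * cexp m x).
      + ring.
      + rewrite E1. ring. }
  assert (q = 0) by (replace q with (- - q) by ring; rewrite Hq; ring).
  subst q. split; auto.
  apply (single_neg m _ M); auto. intros x Hx.
  replace (p * cexp m x) with ((p + 0 * x) * cexp m x) by ring. auto.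
Qed.

Lemma growth_pos (m a : C) (A B : R) : (0 < Re m)%R ->
  (forall x, (0 < x)%R -> (Cmod (a * cexp m x) <= A + B * x)%R) -> a = 0.
Proof.
  intros Hm HB. destruct (Req_dec (Cmod a) 0) as [E|NE]; [now apply Cmod_eq_0|exfalso].
  assert (Hp : (0 < Cmod a)%R) by (pose proof (Cmod_ge_0 a); lra).
  set (r := Re m) in *. set (u := Cmod a) in *.
  set (x := (4 * (Rabs A + Rabs B + 1) / (u * r * r) + 1)%R).
  assert (Hx0 : (0 <= 4 * (Rabs A + Rabs B + 1) / (u * r * r))%R).
  { apply Rdiv_le_0_compat. pose proof (Rabs_pos A); pose proof (Rabs_pos B); lra.
    apply Rmult_lt_0_compat; [apply Rmult_lt_0_compat|]; lra. }
  assert (Hx1 : (1 <= x)%R) by (unfold x; lra).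
  assert (Hux : (u * r * r * x >= 4 * (Rabs A + Rabs B + 1))%R).
  { unfold x. rewrite Rmult_plus_distr_l.
    replace (u * r * r * (4 * (Rabs A + Rabs B + 1) / (u * r * r)))%R with (4 * (Rabs A + Rabs B + 1))%R
      by (field; lra).
    assert (0 < u * r * r)%R by (apply Rmult_lt_0_compat; [apply Rmult_lt_0_compat|]; lra). lra. }
  specialize (HB x ltac:(lra)). rewrite Cmod_mult, cmod_cexp in HB. fold r u in HB.
  assert (Hexp : (exp (r * x) > (1 + r * x / 2) * (1 + r * x / 2))%R).
  { replace (r * x)%R with (r * x / 2 + r * x / 2)%R by field. rewrite exp_plus.
    assert (r * x / 2 <> 0)%R by (apply Rgt_not_eq; apply Rdiv_lt_0_compat; [nra|lra]).
    pose proof (exp_ineq1 _ H). nra. }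
  pose proof (Rle_abs A). pose proof (Rle_abs B). pose proof (Rabs_pos A). pose proof (Rabs_pos B).
  assert (u * (r * x / 2) * (r * x / 2) <= A + B * x)%R.
  { assert (0 < r * x)%R by nra. nra. }
  nra.
Qed.

Close Scope C_scope.
Open Scope R_scope.
Open Scope C_scope.

Lemma D1 E c t : CC3 E -> Dl c E t = cmb (- c) 1 0 0 E t.
Proof. intros H. unfold Dl, cmb. ring. Qed.

Lemma D2 E b c t : CC3 E -> Dl b (Dl c E) t = cmb (b * c) (- (b + c)) 1 0 E t.
Proof.
  intros H. rewrite (Dl_ext b _ (cmb (- c) 1 0 0 E)) by (intros; apply D1; auto).
  rewrite Dl_cmb by auto. unfold cmb. ring.
Qed.

Lemma D3 E a b c t : CC3 E -> Dl a (Dl b (Dl c E)) t =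
  cmb (- (a * b * c)) (a * b + b * c + c * a) (- (a + b + c)) 1 E t.
Proof.
  intros H. rewrite (Dl_ext a _ (cmb (b * c) (- (b + c)) 1 0 E)) by (intros; apply D2; auto).
  rewrite Dl_cmb by auto. unfold cmb. ring.
Qed.

Lemma Cd_D1 E c t : CC3 E -> Cd (Dl c E) t.
Proof. intros H. eapply Cd_ext. intros s; symmetry; apply D1; auto. apply Cd_cmb; auto. Qed.

Lemma Cd_D2 E b c t : CC3 E -> Cd (Dl b (Dl c E)) t.
Proof. intros H. eapply Cd_ext. intros s; symmetry; apply D2; auto. apply Cd_cmb; auto. Qed.

Lemma D2z E a b c t : CC3 E -> Dl b (Dl c (Dl a E)) t = Dl a (Dl b (Dl c E)) t.
Proof.
  intros H. rewrite !D3 by auto. unfold cmb. ring.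
Qed.

Section Core.
Variables (lp m1 m2 : C) (E : R -> C) (dom : R -> Prop).
Hypothesis HE : CC3 E.
Hypothesis Hdom : forall x t, dom x -> betw x t -> dom t.
Hypothesis HP : forall t, dom t -> Dl lp (Dl m1 (Dl m2 E)) t = 0.

Let s := m1 + m2 - lp.

Lemma KE t : (lp - m1) * (lp - m2) * E t = Dl m1 (Dl m2 E) t - Dl s (Dl lp E) t.
Proof. rewrite !D2 by auto. unfold cmb, s. ring. Qed.

Lemma y_form x : dom x -> Dl m1 (Dl m2 E) x = Dl m1 (Dl m2 E) 0 * cexp lp x.
Proof.
  intros Hx. apply Hom1. intros; apply Cd_D2; auto.
  intros t Ht. apply HP. eauto.
Qed.

Lemma u1_form x : dom x -> Dl m2 (Dl lp E) x = Dl m2 (Dl lp E) 0 * cexp m1 x.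
Proof.
  intros Hx. apply Hom1. intros; apply Cd_D2; auto.
  intros t Ht. rewrite D2z by auto. apply HP. eauto.
Qed.

Lemma u2_form x : dom x -> Dl m1 (Dl lp E) x = Dl m1 (Dl lp E) 0 * cexp m2 x.
Proof.
  intros Hx. apply Hom1. intros; apply Cd_D2; auto.
  intros t Ht. rewrite D2z by auto.
  pose proof (HP t (Hdom _ _ Hx Ht)) as Q.
  rewrite D3 in Q by auto. rewrite D3 by auto. rewrite <- Q. unfold cmb. ring.
Qed.

Lemma Dsz t : Dl s (Dl lp E) t = Dl m2 (Dl lp E) t + (lp - m1) * Dl lp E t.
Proof. unfold Dl at 1 3, s. ring. Qed.

Lemma zrep_distinct : m1 <> m2 -> exists c1 c2, forall x, dom x ->
  Dl lp E x = (c1 * cexp m1 x - c2 * cexp m2 x) / (m1 - m2) /\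
  Dl s (Dl lp E) x = c1 * (lp - m2) / (m1 - m2) * cexp m1 x - c2 * (lp - m1) / (m1 - m2) * cexp m2 x.
Proof.
  intros Hne. assert (Hd : m1 - m2 <> 0).
  { intro E0. apply Hne. replace m1 with (m1 - m2 + m2) by ring. rewrite E0. ring. }
  exists (Dl m2 (Dl lp E) 0), (Dl m1 (Dl lp E) 0). intros x Hx.
  assert (Z : Dl lp E x = (Dl m2 (Dl lp E) x - Dl m1 (Dl lp E) x) / (m1 - m2)).
  { unfold Dl. field. auto. }
  rewrite u1_form, u2_form in Z by auto.
  split; auto.
  rewrite Dsz, Z, u1_form by auto. field. auto.
Qed.

Lemma zrep_same : m1 = m2 -> exists c z0, forall x, dom x ->
  Dl lp E x = (z0 + c * x) * cexp m1 x /\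
  Dl s (Dl lp E) x = ((c + (lp - m1) * z0) + (lp - m1) * c * x) * cexp m1 x.
Proof.
  intros Heq. exists (Dl m2 (Dl lp E) 0), (Dl lp E 0). intros x Hx.
  assert (Z : Dl lp E x = (Dl lp E 0 + Dl m2 (Dl lp E) 0 * x) * cexp m1 x).
  { apply Aff1. intros; apply Cd_D1; auto.
    intros t Ht. pose proof (u1_form t (Hdom _ _ Hx Ht)) as U. rewrite <- Heq in U |- *. exact U. }
  split; auto. rewrite Dsz, Z, u1_form by auto. subst m2. ring.
Qed.
End Core.

Lemma cmod_cexp_le1_neg m x : (0 < Re m)%R -> (x < 0)%R -> (Cmod (cexp m x) <= 1)%R.
Proof.
  intros H Hx. rewrite cmod_cexp. rewrite <- exp_0. left. apply exp_increasing. nra.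
Qed.

Lemma cmod_cexp_le1_pos m x : (Re m < 0)%R -> (0 < x)%R -> (Cmod (cexp m x) <= 1)%R.
Proof.
  intros H Hx. rewrite cmod_cexp. rewrite <- exp_0. left. apply exp_increasing. nra.
Qed.

Lemma dom_left x t : (x < 0)%R -> betw x t -> (t < 0)%R.
Proof. unfold betw; lra. Qed.
Lemma dom_right x t : (0 < x)%R -> betw x t -> (0 < t)%R.
Proof. unfold betw; lra. Qed.

Lemma core_left lp m1 m2 E ME : CC3 E -> (0 < Re lp)%R -> (Re m1 < 0)%R -> (Re m2 < 0)%R ->
  lp <> m1 -> lp <> m2 ->
  (forall x, (x < 0)%R -> (Cmod (E x) <= ME)%R) ->
  (forall t, (t < 0)%R -> Dl lp (Dl m1 (Dl m2 E)) t = 0) ->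
  forall x, (x < 0)%R -> Dl lp E x = 0.
Proof.
  intros HE Hlp H1m H2m N1 N2 HB HP.
  assert (Hd1 : lp - m1 <> 0) by (intro E0; apply N1; replace lp with (lp - m1 + m1) by ring; rewrite E0; ring).
  assert (Hd2 : lp - m2 <> 0) by (intro E0; apply N2; replace lp with (lp - m2 + m2) by ring; rewrite E0; ring).
  set (Y0 := Dl m1 (Dl m2 E) 0).
  set (K := (lp - m1) * (lp - m2)).
  assert (Bnd : forall x, (x < 0)%R ->
     (Cmod (Dl (m1 + m2 - lp) (Dl lp E) x) <= Cmod Y0 + Cmod K * ME)%R).
  { intros x Hx.
    replace (Dl (m1 + m2 - lp) (Dl lp E) x) with (Dl m1 (Dl m2 E) x - K * E x)
      by (unfold K; rewrite (KE lp m1 m2 E HE x); ring).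
    rewrite (y_form lp m1 m2 E (fun t => t < 0)%R HE dom_left HP x Hx). fold Y0.
    eapply Rle_trans. apply Cmod_triangle. rewrite Cmod_opp, !Cmod_mult.
    pose proof (cmod_cexp_le1_neg lp x Hlp Hx). pose proof (Cmod_ge_0 Y0).
    pose proof (Cmod_ge_0 K). pose proof (HB x Hx).
    pose proof (Rmult_le_compat_l _ _ _ H0 H). pose proof (Rmult_le_compat_l _ _ _ H1 H2). lra. }
  destruct (Ceq_dec m1 m2) as [Heq|Hne].
  - destruct (zrep_same lp m1 m2 E (fun t => t < 0)%R HE dom_left HP Heq) as [c [z0 HR]].
    destruct (affine_neg m1 (c + (lp - m1) * z0) ((lp - m1) * c) (Cmod Y0 + Cmod K * ME)%R H1m) as [P1 P2].
    { intros x Hx. destruct (HR x Hx) as [_ R2]. rewrite <- R2. apply Bnd; auto. }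
    assert (Hc : c = 0) by (apply (Cmult_eq0 c (lp - m1)); auto; rewrite <- P2; ring).
    subst c. assert (Hz : z0 = 0) by (apply (Cmult_eq0 z0 (lp - m1)); auto; rewrite <- P1; ring).
    subst z0. intros x Hx. destruct (HR x Hx) as [R1 _]. rewrite R1. ring.
  - destruct (zrep_distinct lp m1 m2 E (fun t => t < 0)%R HE dom_left HP Hne) as [c1 [c2 HR]].
    assert (Hd : m1 - m2 <> 0) by (intro E0; apply Hne; replace m1 with (m1 - m2 + m2) by ring; rewrite E0; ring).
    destruct (two_neg m1 m2 (c1 * (lp - m2) / (m1 - m2)) (- (c2 * (lp - m1) / (m1 - m2))) (Cmod Y0 + Cmod K * ME)%R Hne H1m H2m)
      as [P1 P2].
    { intros x Hx. destruct (HR x Hx) as [_ R2].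
      replace (c1 * (lp - m2) / (m1 - m2) * cexp m1 x + - (c2 * (lp - m1) / (m1 - m2)) * cexp m2 x)
        with (Dl (m1 + m2 - lp) (Dl lp E) x) by (rewrite R2; ring).
      apply Bnd; auto. }
    assert (Hc1 : c1 = 0).
    { apply (Cmult_eq0 c1 ((lp - m2) / (m1 - m2))). rewrite <- P1. field; auto.
      intro E0. apply Hd2. replace (lp - m2) with ((lp - m2) / (m1 - m2) * (m1 - m2)) by (field; auto).
      rewrite E0. ring. }
    assert (Hc2 : c2 = 0).
    { apply (Cmult_eq0 c2 ((lp - m1) / (m1 - m2))).
      replace (c2 * ((lp - m1) / (m1 - m2))) with (- - (c2 * (lp - m1) / (m1 - m2))) by (field; auto).
      rewrite P2. ring.
      intro E0. apply Hd1. replace (lp - m1) with ((lp - m1) / (m1 - m2) * (m1 - m2)) by (field; auto).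
      rewrite E0. ring. }
    subst c1 c2. intros x Hx. destruct (HR x Hx) as [R1 _]. rewrite R1. field. auto.
Qed.

Lemma core_right lp m1 m2 E ME : CC3 E -> (0 < Re lp)%R -> (Re m1 < 0)%R -> (Re m2 < 0)%R ->
  (forall x, (0 < x)%R -> (Cmod (E x) <= ME)%R) ->
  (forall t, (0 < t)%R -> Dl lp (Dl m1 (Dl m2 E)) t = 0) ->
  forall x, (0 < x)%R -> Dl m1 (Dl m2 E) x = 0.
Proof.
  intros HE Hlp H1m H2m HB HP.
  set (Y0 := Dl m1 (Dl m2 E) 0).
  set (K := (lp - m1) * (lp - m2)).
  assert (Hy : forall x, (0 < x)%R -> Dl m1 (Dl m2 E) x = Y0 * cexp lp x).
  { intros x Hx. apply (y_form lp m1 m2 E (fun t => 0 < t)%R HE dom_right HP x Hx). }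
  assert (Bz : exists A B, forall x, (0 < x)%R ->
             (Cmod (Dl (m1 + m2 - lp) (Dl lp E) x) <= A + B * x)%R).
  { destruct (Ceq_dec m1 m2) as [Heq|Hne].
    - destruct (zrep_same lp m1 m2 E (fun t => 0 < t)%R HE dom_right HP Heq) as [c [z0 HR]].
      exists (Cmod (c + (lp - m1) * z0)), (Cmod ((lp - m1) * c)). intros x Hx.
      destruct (HR x Hx) as [_ R2]. rewrite R2.
      rewrite Cmod_mult. pose proof (cmod_cexp_le1_pos m1 x H1m Hx).
      assert (Hm : (Cmod (c + (lp - m1) * z0 + (lp - m1) * c * x) <=
                    Cmod (c + (lp - m1) * z0) + Cmod ((lp - m1) * c) * x)%R).
      { eapply Rle_trans. apply Cmod_triangle. rewrite (Cmod_mult _ (RtoC x)), Cmod_R.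
        rewrite Rabs_right by lra. lra. }
      pose proof (Cmod_ge_0 (c + (lp - m1) * z0 + (lp - m1) * c * x)).
      pose proof (Cmod_ge_0 (c + (lp - m1) * z0)). pose proof (Cmod_ge_0 ((lp - m1) * c)).
      pose proof (Cmod_ge_0 (cexp m1 x)).
      pose proof (Rmult_le_compat_l _ _ _ H0 H). nra.
    - destruct (zrep_distinct lp m1 m2 E (fun t => 0 < t)%R HE dom_right HP Hne) as [c1 [c2 HR]].
      exists (Cmod (c1 * (lp - m2) / (m1 - m2)) + Cmod (c2 * (lp - m1) / (m1 - m2)))%R, 0%R.
      intros x Hx. destruct (HR x Hx) as [_ R2]. rewrite R2.
      eapply Rle_trans. apply Cmod_triangle. rewrite Cmod_opp, (Cmod_mult _ (cexp m1 x)), (Cmod_mult _ (cexp m2 x)).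
      pose proof (cmod_cexp_le1_pos m1 x H1m Hx). pose proof (cmod_cexp_le1_pos m2 x H2m Hx).
      pose proof (Cmod_ge_0 (c1 * (lp - m2) / (m1 - m2))). pose proof (Cmod_ge_0 (c2 * (lp - m1) / (m1 - m2))).
      pose proof (Rmult_le_compat_l _ _ _ H1 H). pose proof (Rmult_le_compat_l _ _ _ H2 H0). lra. }
  destruct Bz as [A [B Bz]].
  assert (HY0 : Y0 = 0).
  { apply (growth_pos lp Y0 (Cmod K * ME + A) B Hlp). intros x Hx.
    rewrite <- Hy by auto.
    replace (Dl m1 (Dl m2 E) x) with (K * E x + Dl (m1 + m2 - lp) (Dl lp E) x)
      by (unfold K; rewrite (KE lp m1 m2 E HE x); ring).
    eapply Rle_trans. apply Cmod_triangle. rewrite Cmod_mult.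
    pose proof (Cmod_ge_0 K). pose proof (HB x Hx). pose proof (Rmult_le_compat_l _ _ _ H H0).
    pose proof (Bz x Hx). lra. }
  intros x Hx. rewrite Hy, HY0 by auto. ring.
Qed.

Close Scope C_scope.
Open Scope R_scope.

Section Roots.
Variables (beta cb ub vb xi : R).
Hypotheses (Hbeta : 0 < beta) (Hcb : 0 < cb) (Hub0 : 0 < ub) (Hubc : ub < cb).

Definition kap := cb ^ 2 - ub ^ 2.
Definition zz : C := (beta, vb * xi).
Definition l0 : C := (- beta / ub, - (vb * xi) / ub).
Definition wp := beta ^ 2 - (vb * xi) ^ 2 + kap * xi ^ 2.
Definition wq := 2 * beta * (vb * xi).
Definition rr := sqrt ((sqrt (wp ^ 2 + wq ^ 2) + wp) / 2).
Definition ss := wq / (2 * rr).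
Definition lp : C := ((ub * beta + cb * rr) / kap, (ub * (vb * xi) + cb * ss) / kap).
Definition lm : C := ((ub * beta - cb * rr) / kap, (ub * (vb * xi) - cb * ss) / kap).

Lemma kap_pos : 0 < kap.
Proof. unfold kap. nra. Qed.

Lemma rr_ge : beta <= rr.
Proof.
  unfold rr. rewrite <- (sqrt_square beta) by lra. apply sqrt_le_1_alt.
  assert (HA : 0 <= kap * xi ^ 2) by (pose proof kap_pos; nra).
  set (y := vb * xi) in *.
  assert (2 * beta * beta - wp <= sqrt (wp ^ 2 + wq ^ 2)).
  { destruct (Rle_or_lt (2 * beta * beta - wp) 0) as [H|H].
    - pose proof (sqrt_pos (wp ^ 2 + wq ^ 2)). lra.
    - rewrite <- (sqrt_square (2 * beta * beta - wp)) by lra.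
      apply sqrt_le_1_alt. unfold wp, wq. fold y. nra. }
  lra.
Qed.

Lemma rr_pos : 0 < rr.
Proof. pose proof rr_ge. lra. Qed.

Lemma rr_sq : rr * rr = (sqrt (wp ^ 2 + wq ^ 2) + wp) / 2.
Proof.
  unfold rr. apply sqrt_sqrt.
  assert (Rabs wp <= sqrt (wp ^ 2 + wq ^ 2)).
  { rewrite <- sqrt_Rsqr_abs. apply sqrt_le_1_alt. unfold Rsqr. nra. }
  pose proof (Rle_abs (- wp)). rewrite Rabs_Ropp in H0. lra.
Qed.

Lemma sq_rel : rr * rr - ss * ss = wp /\ 2 * rr * ss = wq.
Proof.
  pose proof rr_pos. pose proof rr_sq.
  assert (Hm : sqrt (wp ^ 2 + wq ^ 2) * sqrt (wp ^ 2 + wq ^ 2) = wp ^ 2 + wq ^ 2).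
  { apply sqrt_sqrt. nra. }
  split.
  - unfold ss.
    replace (rr * rr - wq / (2 * rr) * (wq / (2 * rr))) with
      ((4 * (rr * rr) * (rr * rr) - wq * wq) / (4 * (rr * rr))) by (field; lra).
    rewrite H0. set (S := sqrt (wp ^ 2 + wq ^ 2)) in *.
    assert (HD : 0 < (S + wp) / 2) by (rewrite <- H0; nra).
    assert (E1 : 4 * ((S + wp) / 2) * ((S + wp) / 2) - wq * wq = wp * (4 * ((S + wp) / 2))) by nra.
    rewrite E1. field. lra.
  - unfold ss. field. lra.
Qed.

Lemma Re_lp : 0 < Re lp.
Proof.
  unfold lp; simpl. pose proof kap_pos. pose proof rr_pos.
  apply Rdiv_lt_0_compat; nra.
Qed.

Lemma Re_lm : Re lm < 0.
Proof.
  unfold lm; simpl. pose proof kap_pos. pose proof rr_ge.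
  apply Rdiv_neg_pos; nra.
Qed.

Lemma Re_l0 : Re l0 < 0.
Proof. unfold l0; simpl. apply Rdiv_neg_pos; lra. Qed.

Lemma lp_ne_lm : lp <> lm.
Proof. intro E. pose proof Re_lp. pose proof Re_lm. rewrite E in H. lra. Qed.
Lemma lp_ne_l0 : lp <> l0.
Proof. intro E. pose proof Re_lp. pose proof Re_l0. rewrite E in H. lra. Qed.

Lemma sum_l : Cplus lp lm = ((2 * ub * beta) / kap, (2 * ub * (vb * xi)) / kap).
Proof.
  pose proof kap_pos. unfold lp, lm. apply injective_projections; simpl; field; lra.
Qed.

Lemma prod_l : Cmult lp lm =
  (- (beta ^ 2 - (vb * xi) ^ 2 + cb ^ 2 * xi ^ 2) / kap, - (2 * beta * (vb * xi)) / kap).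
Proof.
  pose proof kap_pos. destruct sq_rel as [S1 S2].
  assert (Hk : cb ^ 2 = kap + ub ^ 2) by (unfold kap; ring).
  unfold lp, lm. apply injective_projections; simpl.
  - transitivity ((ub^2 * (beta^2 - (vb*xi)^2) - cb^2 * (rr*rr - ss*ss)) / (kap * kap)).
    + field. lra.
    + rewrite S1. unfold wp, kap. field. unfold kap in H. nra.
  - transitivity ((ub^2 * (2 * beta * (vb * xi)) - cb^2 * (2 * rr * ss)) / (kap * kap)).
    + field. lra.
    + rewrite S2. unfold wq, kap. field. unfold kap in H. nra.
Qed.

Open Scope C_scope.

Lemma Gop_cmb f t : Gop beta ub vb xi f t = cmb zz ub 0 0 f t.
Proof.
  unfold Gop, cmb, iy, zz.
  destruct (f t), (dn 1 f t), (dn 2 f t), (dn 3 f t).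
  apply injective_projections; simpl; ring.
Qed.

Lemma dnG f t : CC3 f -> dn 1 (Gop beta ub vb xi f) t = cmb 0 zz ub 0 f t.
Proof.
  intros H. rewrite (dn_ext _ (cmb zz ub 0 0 f) 1 t (Gop_cmb f)).
  rewrite (cder_dn1 _ _ _ (cder_cmb f zz ub 0 t H)). unfold cmb. ring.
Qed.

Lemma dn2G f t : CC3 f -> dn 2 (Gop beta ub vb xi f) t = cmb 0 0 zz ub f t.
Proof.
  intros H. rewrite <- dn11.
  rewrite (dn_ext _ (cmb 0 zz ub 0 f) 1 t (fun s => dnG f s H)).
  rewrite (cder_dn1 _ _ _ (cder_cmb f 0 zz ub t H)). unfold cmb. ring.
Qed.

Lemma LG_fact f t : CC3 f ->
  LGop beta cb ub vb xi f t = RtoC (- (kap * ub)) * Dl lp (Dl lm (Dl l0 f)) t.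
Proof.
  intros H. unfold LGop, Lop. rewrite dnG, dn2G, Gop_cmb by auto.
  rewrite D3 by auto.
  replace (lp * lm + lm * l0 + l0 * lp) with (lp * lm + l0 * (lp + lm)) by ring.
  rewrite prod_l, sum_l.
  pose proof kap_pos as Hk.
  unfold cmb, l0, zz, iy.
  destruct (f t), (dn 1 f t), (dn 2 f t), (dn 3 f t).
  unfold kap in *.
  apply injective_projections; simpl; field; split; nra.
Qed.

End Roots.

Close Scope C_scope.
Open Scope R_scope.
Open Scope C_scope.

Lemma dn1_sub F H s : Cd F s -> Cd H s -> dn 1 (fun t => F t - H t) s = dn 1 F s - dn 1 H s.
Proof.
  intros A B. apply cder_dn1.
  eapply cder_eq. eapply cder_ext; [|apply (cder_lin F H s _ _ 1 (-1) (Cd_cder _ _ A) (Cd_cder _ _ B))].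
  intros; simpl; ring. ring.
Qed.

Lemma Cd_sub F H s : Cd F s -> Cd H s -> Cd (fun t => F t - H t) s.
Proof.
  intros A B. eapply cder_Cd. eapply cder_ext; [|apply (cder_lin F H s _ _ 1 (-1) (Cd_cder _ _ A) (Cd_cder _ _ B))].
  intros; simpl; ring.
Qed.

Section Sub.
Variables f g : R -> C.
Hypotheses (Hf : CC3 f) (Hg : CC3 g).
Let d := fun t => f t - g t.

Lemma dn1_d s : dn 1 d s = dn 1 f s - dn 1 g s.
Proof. apply dn1_sub; [apply Hf|apply Hg]. Qed.
Lemma dn2_d s : dn 2 d s = dn 2 f s - dn 2 g s.
Proof.
  rewrite <- dn11. rewrite (dn_ext _ (fun t => dn 1 f t - dn 1 g t) 1 s dn1_d).
  apply dn1_sub; [apply Hf|apply Hg].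
Qed.
Lemma dn3_d s : dn 3 d s = dn 3 f s - dn 3 g s.
Proof.
  rewrite <- dn12. rewrite (dn_ext _ (fun t => dn 2 f t - dn 2 g t) 1 s dn2_d).
  apply dn1_sub; [apply Hf|apply Hg].
Qed.

Lemma CC3_d : CC3 d.
Proof.
  intros t. split; [|split].
  - apply Cd_sub; [apply Hf|apply Hg].
  - eapply Cd_ext. intros s; symmetry; apply dn1_d. apply Cd_sub; [apply Hf|apply Hg].
  - eapply Cd_ext. intros s; symmetry; apply dn2_d. apply Cd_sub; [apply Hf|apply Hg].
Qed.

Lemma cmb_d a0 a1 a2 a3 s : cmb a0 a1 a2 a3 d s = cmb a0 a1 a2 a3 f s - cmb a0 a1 a2 a3 g s.
Proof. unfold cmb. rewrite dn1_d, dn2_d, dn3_d. unfold d. ring. Qed.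

End Sub.

Lemma cder_cmb_ex E a0 a1 a2 t : CC3 E -> forall F, (forall s, F s = cmb a0 a1 a2 0 E s) ->
  exists l, cder F t l.
Proof.
  intros H F HF. eexists. eapply cder_ext. intros s; symmetry; apply HF. apply cder_cmb; auto.
Qed.

Lemma dn1_zero_loc (F : R -> C) (s : R) x : s <> 0%R -> (0 < s * x)%R ->
  (forall t, (0 < s * t)%R -> F t = 0) -> dn 1 F x = 0.
Proof.
  intros Hs Hx HZ.
  assert (L : locally x (fun t => 0 < s * t)%R).
  { assert (Hp : (0 < Rabs x)%R).
    { apply Rabs_pos_lt. intro E0. rewrite E0 in Hx. lra. }
    exists (mkposreal _ Hp). intros t Ht. simpl in Ht.
    unfold ball in Ht; simpl in Ht; unfold AbsRing_ball, abs, minus, plus, opp in Ht; simpl in Ht.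
    assert (Hs' : (0 < Rabs s)%R) by (apply Rabs_pos_lt; auto).
    assert (A1' : (Rabs (s * (t + - x)) < s * x)%R).
    { rewrite Rabs_mult. replace (s * x)%R with (Rabs (s * x)) by (apply Rabs_right; lra).
      rewrite Rabs_mult. apply Rmult_lt_compat_l; auto. }
    pose proof (Rle_abs (- (s * (t + - x)))). rewrite Rabs_Ropp in H. nra. }
  assert (E1 : Derive (fun t => Re (F t)) x = 0%R).
  { rewrite (Derive_ext_loc _ (fun _ => 0%R)). apply Derive_const.
    eapply filter_imp; [|exact L]. intros t Ht; simpl; rewrite HZ; auto. }
  assert (E2 : Derive (fun t => Im (F t)) x = 0%R).
  { rewrite (Derive_ext_loc _ (fun _ => 0%R)). apply Derive_const.
    eapply filter_imp; [|exact L]. intros t Ht; simpl; rewrite HZ; auto. }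
  unfold dn. simpl. rewrite E1, E2. reflexivity.
Qed.

Close Scope C_scope.
Open Scope R_scope.
Open Scope C_scope.

Section Dom.
Variables (beta cb ub vb xi : R).
Hypotheses (Hbeta : (0 < beta)%R) (Hcb : (0 < cb)%R) (Hub0 : (0 < ub)%R) (Hubc : (ub < cb)%R).

Let LP := lp beta cb ub vb xi.
Let LM := lm beta cb ub vb xi.
Let L0 := l0 beta ub vb xi.

Lemma ub_ne : RtoC ub <> 0.
Proof. intro E. apply (f_equal fst) in E. simpl in E. lra. Qed.

Lemma P_of_LG h t : CC3 h -> LGop beta cb ub vb xi h t = 0 -> Dl LP (Dl LM (Dl L0 h)) t = 0.
Proof.
  intros H E. rewrite LG_fact in E by auto.
  apply (Cmult_eq0 _ (RtoC (- (kap cb ub * ub)))).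
  - rewrite Cmult_comm. exact E.
  - intro E0. apply (f_equal fst) in E0. simpl in E0.
    pose proof (kap_pos cb ub Hub0 Hubc). nra.
Qed.

Lemma G_D h t : CC3 h -> Gop beta ub vb xi h t = ub * Dl L0 h t.
Proof.
  intros H. rewrite Gop_cmb, D1 by auto. unfold cmb, zz, L0, l0.
  destruct (h t), (dn 1 h t), (dn 2 h t), (dn 3 h t).
  apply injective_projections; simpl; field; lra.
Qed.

Lemma DG h c t : CC3 h -> Dl c (Gop beta ub vb xi h) t = ub * Dl c (Dl L0 h) t.
Proof.
  intros H. rewrite (Dl_ext c _ (cmb (ub * - L0) ub 0 0 h)).
  - rewrite Dl_cmb, D2 by auto. unfold cmb. ring.
  - intros s. rewrite G_D, D1 by auto. unfold cmb. ring.
Qed.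

Lemma dn1_Dl c F t : dn 1 F t = c * F t + Dl c F t.
Proof. unfold Dl. ring. Qed.

Section O1.
Variable h : R -> C.
Hypotheses (Hh : CC3 h) (Hb : bounded_on Omega1 h)
  (HL : forall x, Omega1 x -> LGop beta cb ub vb xi h x = 0).

Lemma O1a x : (x < 0)%R -> Dl LP h x = 0.
Proof.
  destruct Hb as [M HM].
  intros Hx.
  refine (core_left LP LM L0 h M Hh _ _ _ _ _ HM _ x Hx).
  - apply Re_lp; auto.
  - apply Re_lm; auto.
  - apply Re_l0; auto.
  - apply lp_ne_lm; auto.
  - apply lp_ne_l0; auto.
  - intros t Ht. apply P_of_LG; auto; try (apply HL; exact Ht).
Qed.

Lemma O1b : Dl LP h 0 = 0.
Proof.
  destruct (cder_cmb_ex h (- LP) 1 0 0 Hh (Dl LP h) (fun s => D1 h LP s Hh)) as [l Hl].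
  apply (cont_zero_C _ (-1) l); auto. lra.
  intros t Ht. apply O1a. lra.
Qed.

Lemma O1c : dn 1 (Gop beta ub vb xi h) 0 = LP * Gop beta ub vb xi h 0.
Proof.
  rewrite (dn1_Dl LP), DG by auto.
  assert (Z : Dl LP (Dl L0 h) 0 = 0).
  { destruct (cder_cmb_ex h (LP * L0) (- (LP + L0)) 1 0 Hh (Dl LP (Dl L0 h)) (fun s => D2 h LP L0 s Hh))
      as [l Hl].
    apply (cont_zero_C _ (-1) l); auto. lra.
    intros t Ht.
    assert (E : Dl LP (Dl L0 h) t = Dl L0 (Dl LP h) t) by (rewrite !D2 by auto; unfold cmb; ring).
    rewrite E. unfold Dl at 1.
    rewrite (dn1_zero_loc (Dl LP h) (-1) t); try lra.
    - rewrite O1a by lra. ring.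
    - intros s Hs. apply O1a. lra. }
  rewrite Z. ring.
Qed.

Lemma O1d : Gop beta ub vb xi h 0 = ub * (LP - L0) * h 0.
Proof.
  rewrite G_D by auto. pose proof O1b as B. unfold Dl in *.
  assert (E : dn 1 h 0 = LP * h 0).
  { transitivity (dn 1 h 0 - LP * h 0 + LP * h 0); [ring|]. rewrite B; ring. }
  rewrite E. ring.
Qed.

Lemma O1e x : (x < 0)%R -> h x = h 0 * cexp LP x.
Proof.
  intros Hx. apply Hom1. intros; apply Hh.
  intros t Ht. apply O1a. apply (dom_left x t); auto.
Qed.
End O1.

Section O2.
Variable h : R -> C.
Hypotheses (Hh : CC3 h) (Hb : bounded_on Omega2 h)
  (HL : forall x, Omega2 x -> LGop beta cb ub vb xi h x = 0).

Lemma O2a x : (0 < x)%R -> Dl LM (Dl L0 h) x = 0.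
Proof.
  destruct Hb as [M HM].
  intros Hx.
  refine (core_right LP LM L0 h M Hh _ _ _ HM _ x Hx).
  - apply Re_lp; auto.
  - apply Re_lm; auto.
  - apply Re_l0; auto.
  - intros t Ht. apply P_of_LG; auto; try (apply HL; exact Ht).
Qed.

Lemma O2c : dn 1 (Gop beta ub vb xi h) 0 = LM * Gop beta ub vb xi h 0.
Proof.
  rewrite (dn1_Dl LM), DG by auto.
  assert (Z : Dl LM (Dl L0 h) 0 = 0).
  { destruct (cder_cmb_ex h (LM * L0) (- (LM + L0)) 1 0 Hh (Dl LM (Dl L0 h)) (fun s => D2 h LM L0 s Hh))
      as [l Hl].
    apply (cont_zero_C _ 1 l); [lra | exact Hl | intros t Ht; apply O2a; lra]. }
  rewrite Z. ring.
Qed.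

Lemma O2e : Gop beta ub vb xi h 0 = 0 -> h 0 = 0 -> forall x, (0 < x)%R -> h x = 0.
Proof.
  intros HG H0 x Hx.
  assert (U0 : Dl L0 h 0 = 0).
  { rewrite G_D in HG by auto. apply (Cmult_eq0 _ ub). rewrite Cmult_comm; exact HG. apply ub_ne. }
  assert (U : forall y, (0 < y)%R -> Dl L0 h y = 0).
  { intros y Hy. rewrite (Hom1 (Dl L0 h) LM y).
    - rewrite U0. ring.
    - intros; apply Cd_D1; auto.
    - intros t Ht. apply O2a. apply (dom_right y t); auto. }
  rewrite (Hom1 h L0 x).
  - rewrite H0. ring.
  - intros; apply Hh.
  - intros t Ht. apply U. apply (dom_right x t); auto.
Qed.
End O2.
End Dom.

Section Lin.
Variables (beta cb ub vb xi : R).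
Hypotheses (Hbeta : (0 < beta)%R) (Hcb : (0 < cb)%R) (Hub0 : (0 < ub)%R) (Hubc : (ub < cb)%R).

Lemma LG_sub f g t : CC3 f -> CC3 g ->
  LGop beta cb ub vb xi (fun s => f s - g s) t = LGop beta cb ub vb xi f t - LGop beta cb ub vb xi g t.
Proof.
  intros Hf Hg. rewrite !LG_fact by (auto; try apply CC3_d; auto).
  rewrite !D3 by (auto; try apply CC3_d; auto). rewrite cmb_d by auto. ring.
Qed.

Lemma G_sub f g t : CC3 f -> CC3 g ->
  Gop beta ub vb xi (fun s => f s - g s) t = Gop beta ub vb xi f t - Gop beta ub vb xi g t.
Proof. intros Hf Hg. rewrite !Gop_cmb. rewrite cmb_d by auto. reflexivity. Qed.

Lemma dnG_sub f g t : CC3 f -> CC3 g ->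
  dn 1 (Gop beta ub vb xi (fun s => f s - g s)) t =
  dn 1 (Gop beta ub vb xi f) t - dn 1 (Gop beta ub vb xi g) t.
Proof.
  intros Hf Hg. rewrite !dnG by (auto; try apply CC3_d; auto). rewrite cmb_d by auto. reflexivity.
Qed.
End Lin.

Lemma bounded_sub D f g : bounded_on D f -> bounded_on (fun _ => True) g ->
  bounded_on D (fun s => f s - g s).
Proof.
  intros [M1 H1'] [M2 H2']. exists (M1 + M2)%R. intros x Hx.
  eapply Rle_trans. apply Cmod_triangle. rewrite Cmod_opp.
  pose proof (H1' x Hx). pose proof (H2' x I). lra.
Qed.

Lemma Aflux_p cb ub vb xi w : Aflux cb ub vb xi 1 0 w 0 =
  RtoC (kap cb ub) * dn 1 w 0 + RtoC (- (ub * vb)) * iy xi * w 0.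
Proof.
  unfold Aflux, kap, iy. destruct (dn 1 w 0), (w 0).
  apply injective_projections; simpl; ring.
Qed.

Lemma Aflux_m cb ub vb xi w : Aflux cb ub vb xi (-1) 0 w 0 =
  - (RtoC (kap cb ub) * dn 1 w 0 + RtoC (- (ub * vb)) * iy xi * w 0).
Proof.
  unfold Aflux, kap, iy. destruct (dn 1 w 0), (w 0).
  apply injective_projections; simpl; ring.
Qed.

Lemma Bflux_p beta cb ub vb xi w : Bflux beta cb ub vb xi 1 0 w 0 =
  RtoC (kap cb ub) * dn 1 w 0 + RtoC (- (ub * vb)) * iy xi * w 0 - RtoC (beta * ub) * w 0.
Proof.
  unfold Bflux, Aflux, kap, iy. destruct (dn 1 w 0), (w 0).
  apply injective_projections; simpl; field.
Qed.

Lemma Bflux_m beta cb ub vb xi w : Bflux beta cb ub vb xi (-1) 0 w 0 =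
  - (RtoC (kap cb ub) * dn 1 w 0 + RtoC (- (ub * vb)) * iy xi * w 0) + RtoC (beta * ub) * w 0.
Proof.
  unfold Bflux, Aflux, kap, iy. destruct (dn 1 w 0), (w 0).
  apply injective_projections; simpl; field.
Qed.

Lemma alpha_id beta cb ub vb xi : (0 < ub)%R -> (ub < cb)%R ->
  RtoC (kap cb ub) * lp beta cb ub vb xi + RtoC (- (ub * vb)) * iy xi - RtoC (beta * ub) =
  - (RtoC (kap cb ub) * lm beta cb ub vb xi + RtoC (- (ub * vb)) * iy xi) + RtoC (beta * ub).
Proof.
  intros H1' H2'. pose proof (sum_l beta cb ub vb xi H1' H2') as S.
  pose proof (kap_pos cb ub H1' H2') as K.
  transitivity (RtoC (kap cb ub) * (lp beta cb ub vb xi + lm beta cb ub vb xi)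
                - RtoC (kap cb ub) * lm beta cb ub vb xi + RtoC (- (ub * vb)) * iy xi - RtoC (beta * ub)).
  - ring.
  - rewrite S. unfold iy. destruct (lm beta cb ub vb xi).
    apply injective_projections; simpl; field; lra.
Qed.

Close Scope C_scope.
Open Scope R_scope.

Theorem mainTheorem2 (beta cb ub vb : R)
  (Hbeta : 0 < beta) (Hcb : 0 < cb) (Hub0 : 0 < ub) (Hubc : ub < cb)
  (g : R -> R -> C) (Q : R -> R -> C)
  (Q1 Q2 Qt1 Qt2 : nat -> R -> R -> C)
  (* Q solves L G Q = g in R^2 (Fourier sense) *)
  (HQreg : forall xi, C3 (Q xi) /\ bounded_on (fun _ => True) (Q xi))
  (HQeq : forall xi x, LGop beta cb ub vb xi (Q xi) x = g xi x)
  (* regularity / boundedness of the iterates (Fourier sense) *)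
  (HQ1reg : forall k xi, (k <= 2)%nat -> C3 (Q1 k xi) /\ bounded_on Omega1 (Q1 k xi))
  (HQ2reg : forall k xi, (k <= 2)%nat -> C3 (Q2 k xi) /\ bounded_on Omega2 (Q2 k xi))
  (HQt1reg : forall k xi, (k <= 1)%nat -> C3 (Qt1 k xi) /\ bounded_on Omega1 (Qt1 k xi))
  (HQt2reg : forall k xi, (k <= 1)%nat -> C3 (Qt2 k xi) /\ bounded_on Omega2 (Qt2 k xi))
  (* initial values: G Q^{1,0} = G Q^{2,0} on Gamma *)
  (Hinit : forall xi, Gop beta ub vb xi (Q1 0%nat xi) 0 = Gop beta ub vb xi (Q2 0%nat xi) 0)
  (* correction step *)
  (Hcorr : forall k xi, (k <= 1)%nat ->
     let gamma := Cmult (RtoC (- / 2))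
       (Cplus (Aflux cb ub vb xi 1 0 (Gop beta ub vb xi (Q1 k xi)) 0)
              (Aflux cb ub vb xi (-1) 0 (Gop beta ub vb xi (Q2 k xi)) 0)) in
     (forall x, Omega1 x -> LGop beta cb ub vb xi (Qt1 k xi) x = RtoC 0) /\
     Bflux beta cb ub vb xi 1 0 (Gop beta ub vb xi (Qt1 k xi)) 0 = gamma /\
     (forall x, Omega2 x -> LGop beta cb ub vb xi (Qt2 k xi) x = RtoC 0) /\
     Bflux beta cb ub vb xi (-1) 0 (Gop beta ub vb xi (Qt2 k xi)) 0 = gamma /\
     Qt2 k xi 0 = RtoC 0)
  (* update step *)
  (Hupd : forall k xi, (k <= 1)%nat ->
     let delta := Cmult (RtoC (/ 2))
       (Cplus (Gop beta ub vb xi (Qt1 k xi) 0) (Gop beta ub vb xi (Qt2 k xi) 0)) in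
     (forall x, Omega1 x -> LGop beta cb ub vb xi (Q1 (S k) xi) x = g xi x) /\
     Gop beta ub vb xi (Q1 (S k) xi) 0 = Cplus (Gop beta ub vb xi (Q1 k xi) 0) delta /\
     (forall x, Omega2 x -> LGop beta cb ub vb xi (Q2 (S k) xi) x = g xi x) /\
     Gop beta ub vb xi (Q2 (S k) xi) 0 = Cplus (Gop beta ub vb xi (Q2 k xi) 0) delta /\
     Q2 (S k) xi 0 = Cplus (Q1 k xi 0) (Qt1 k xi 0)) :
  forall xi x,
    (Omega1 x -> Q1 2%nat xi x = Q xi x) /\ (Omega2 x -> Q2 2%nat xi x = Q xi x).
Proof.
  intros xi x.
  pose proof (kap_pos cb ub Hub0 Hubc) as Hk.
  set (LP := lp beta cb ub vb xi). set (LM := lm beta cb ub vb xi). set (L0 := l0 beta ub vb xi).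
  set (KA := RtoC (kap cb ub)). set (MM := (RtoC (- (ub * vb)) * iy xi)%C). set (BU := RtoC (beta * ub)).
  set (alpha := (KA * LP + MM - BU)%C).
  assert (Ha' : alpha = (- (KA * LM + MM) + BU)%C) by (apply alpha_id; auto).
  assert (H2a : (2 * alpha = KA * (LP - LM))%C).
  { transitivity (alpha + alpha)%C; [ring|]. rewrite Ha' at 2. unfold alpha. ring. }
  assert (HKA : KA <> RtoC 0).
  { intro E. apply (f_equal fst) in E. unfold KA in E. simpl in E. lra. }
  assert (Hal : alpha <> RtoC 0).
  { intro E. rewrite E in H2a. apply (lp_ne_lm beta cb ub vb xi Hbeta Hub0 Hubc). fold LP LM.
    assert (Z : ((LP - LM) * KA = 0)%C) by (rewrite Cmult_comm, <- H2a; ring).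
    apply Cmult_eq0 in Z; auto.
    replace LP with (LP - LM + LM)%C by ring. rewrite Z. ring. }
  assert (HLP0 : (RtoC ub * (LP - L0))%C <> RtoC 0).
  { intro E. rewrite Cmult_comm in E. apply Cmult_eq0 in E. 2:{ apply ub_ne; auto. }
    apply (lp_ne_l0 beta cb ub vb xi Hbeta Hub0 Hubc). fold LP L0.
    replace LP with (LP - L0 + L0)%C by ring. rewrite E. ring. }
  assert (CQ : CC3 (Q xi)) by (apply C3_CC3; apply HQreg).
  assert (BQ : bounded_on (fun _ => True) (Q xi)) by apply HQreg.
  assert (CQ1 : forall k, (k <= 2)%nat -> CC3 (Q1 k xi)) by (intros; apply C3_CC3; apply HQ1reg; auto).
  assert (CQ2 : forall k, (k <= 2)%nat -> CC3 (Q2 k xi)) by (intros; apply C3_CC3; apply HQ2reg; auto).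
  assert (CT1 : forall k, (k <= 1)%nat -> CC3 (Qt1 k xi)) by (intros; apply C3_CC3; apply HQt1reg; auto).
  assert (CT2 : forall k, (k <= 1)%nat -> CC3 (Qt2 k xi)) by (intros; apply C3_CC3; apply HQt2reg; auto).
  set (e1 := fun k s => (Q1 k xi s - Q xi s)%C).
  set (e2 := fun k s => (Q2 k xi s - Q xi s)%C).
  assert (CE1 : forall k, (k <= 2)%nat -> CC3 (e1 k)) by (intros; apply CC3_d; auto).
  assert (CE2 : forall k, (k <= 2)%nat -> CC3 (e2 k)) by (intros; apply CC3_d; auto).
  assert (BE1 : forall k, (k <= 2)%nat -> bounded_on Omega1 (e1 k))
    by (intros; apply bounded_sub; auto; apply HQ1reg; auto).
  assert (BE2 : forall k, (k <= 2)%nat -> bounded_on Omega2 (e2 k))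
    by (intros; apply bounded_sub; auto; apply HQ2reg; auto).
  assert (LE1 : forall k, (k <= 1)%nat -> forall t, Omega1 t -> LGop beta cb ub vb xi (e1 (S k)) t = 0%C).
  { intros k Hkk t Ht. unfold e1. assert (CC3 (Q1 (S k) xi)) by (apply CQ1; lia). rewrite LG_sub by auto.
    destruct (Hupd k xi Hkk) as [U1 _]. rewrite U1, HQeq by auto. ring. }
  assert (LE2 : forall k, (k <= 1)%nat -> forall t, Omega2 t -> LGop beta cb ub vb xi (e2 (S k)) t = 0%C).
  { intros k Hkk t Ht. unfold e2. assert (CC3 (Q2 (S k) xi)) by (apply CQ2; lia). rewrite LG_sub by auto.
    destruct (Hupd k xi Hkk) as [_ [_ [U3 _]]]. rewrite U3, HQeq by auto. ring. }
  assert (A1B1 : Gop beta ub vb xi (e1 1%nat) 0 = Gop beta ub vb xi (e2 1%nat) 0).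
  { unfold e1, e2. rewrite !G_sub by auto.
    destruct (Hupd 0%nat xi ltac:(lia)) as [_ [U2 [_ [U4 _]]]].
    rewrite U2, U4, Hinit. reflexivity. }
  set (a1 := Gop beta ub vb xi (e1 1%nat) 0).
  pose proof (Hcorr 1%nat xi ltac:(lia)) as Hc1. cbv zeta in Hc1.
  destruct Hc1 as [C1 [C2 [C3' [C4 C5]]]].
  set (gamma1 := (RtoC (- / 2) *
          (Aflux cb ub vb xi 1 0 (Gop beta ub vb xi (Q1 1%nat xi)) 0 +
           Aflux cb ub vb xi (-1) 0 (Gop beta ub vb xi (Q2 1%nat xi)) 0))%C) in *.
  assert (D1' : dn 1 (Gop beta ub vb xi (Q1 1%nat xi)) 0 = (LP * a1 + dn 1 (Gop beta ub vb xi (Q xi)) 0)%C).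
  { pose proof (O1c beta cb ub vb xi Hbeta Hub0 Hubc (e1 1%nat) (CE1 1%nat ltac:(lia))
                   (BE1 1%nat ltac:(lia)) (LE1 0%nat ltac:(lia))) as O.
    fold LP a1 in O. unfold e1 in O. rewrite dnG_sub in O by (auto; apply CQ1; lia).
    rewrite <- O. ring. }
  assert (D2' : dn 1 (Gop beta ub vb xi (Q2 1%nat xi)) 0 = (LM * a1 + dn 1 (Gop beta ub vb xi (Q xi)) 0)%C).
  { pose proof (O2c beta cb ub vb xi Hbeta Hub0 Hubc (e2 1%nat) (CE2 1%nat ltac:(lia))
                   (BE2 1%nat ltac:(lia)) (LE2 0%nat ltac:(lia))) as O.
    fold LM in O. rewrite <- A1B1 in O. fold a1 in O. unfold e2 in O. rewrite dnG_sub in O by (auto; apply CQ2; lia).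
    rewrite <- O. ring. }
  assert (G1' : Gop beta ub vb xi (Q1 1%nat xi) 0 = (a1 + Gop beta ub vb xi (Q xi) 0)%C).
  { unfold a1, e1. rewrite G_sub by auto. ring. }
  assert (G2' : Gop beta ub vb xi (Q2 1%nat xi) 0 = (a1 + Gop beta ub vb xi (Q xi) 0)%C).
  { unfold a1. rewrite A1B1. unfold e2. rewrite G_sub by auto. ring. }
  assert (Hg1 : gamma1 = (- alpha * a1)%C).
  { unfold gamma1. rewrite Aflux_p, Aflux_m, D1', D2', G1', G2'.
    transitivity (RtoC (- / 2) * (KA * (LP - LM)) * a1)%C.
    - unfold KA, MM. ring.
    - rewrite <- H2a. apply injective_projections; simpl; field; lra. }
  assert (HP1 : Gop beta ub vb xi (Qt1 1%nat xi) 0 = (- a1)%C).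
  { set (X := Gop beta ub vb xi (Qt1 1%nat xi) 0).
    assert (Z : ((X + a1) * alpha = 0)%C).
    { transitivity (alpha * X + alpha * a1)%C; [ring|].
    replace (alpha * X)%C with gamma1.
    - rewrite Hg1. ring.
    - rewrite <- C2, Bflux_p, (O1c beta cb ub vb xi Hbeta Hub0 Hubc (Qt1 1%nat xi)
          (CT1 1%nat ltac:(lia)) (proj2 (HQt1reg 1%nat xi ltac:(lia))) C1).
      fold LP X. unfold alpha, KA, MM, BU. ring. }
    apply Cmult_eq0 in Z; auto. replace X with (X + a1 - a1)%C by ring. rewrite Z. ring. }
  assert (HR1 : Gop beta ub vb xi (Qt2 1%nat xi) 0 = (- a1)%C).
  { set (X := Gop beta ub vb xi (Qt2 1%nat xi) 0).
    assert (Z : ((X + a1) * alpha = 0)%C).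
    { transitivity (alpha * X + alpha * a1)%C; [ring|].
    replace (alpha * X)%C with gamma1.
    - rewrite Hg1. ring.
    - rewrite <- C4, Bflux_m, (O2c beta cb ub vb xi Hbeta Hub0 Hubc (Qt2 1%nat xi)
          (CT2 1%nat ltac:(lia)) (proj2 (HQt2reg 1%nat xi ltac:(lia))) C3').
      fold LM X. rewrite Ha'. unfold KA, MM, BU. ring. }
    apply Cmult_eq0 in Z; auto. replace X with (X + a1 - a1)%C by ring. rewrite Z. ring. }
  destruct (Hupd 1%nat xi ltac:(lia)) as [_ [U2 [_ [U4 U5]]]]. cbv zeta in U2, U4.
  rewrite HP1, HR1 in U2, U4.
  assert (A2 : Gop beta ub vb xi (e1 2%nat) 0 = 0%C).
  { unfold e1. rewrite G_sub by auto. rewrite U2, G1'. apply injective_projections; simpl; field. }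
  assert (B2 : Gop beta ub vb xi (e2 2%nat) 0 = 0%C).
  { unfold e2. rewrite G_sub by auto. rewrite U4, G2'. apply injective_projections; simpl; field. }
  split.
  - intros Hx.
    pose proof (O1d beta cb ub vb xi Hbeta Hub0 Hubc (e1 2%nat) (CE1 2%nat ltac:(lia))
                   (BE1 2%nat ltac:(lia)) (LE1 1%nat ltac:(lia))) as O.
    fold LP L0 in O. rewrite A2 in O.
    assert (Z0 : e1 2%nat 0 = 0%C).
    { apply (Cmult_eq0 _ (RtoC ub * (LP - L0))%C); auto. rewrite Cmult_comm, <- O. reflexivity. }
    assert (Z : e1 2%nat x = 0%C).
    { rewrite (O1e beta cb ub vb xi Hbeta Hub0 Hubc (e1 2%nat) (CE1 2%nat ltac:(lia))
                   (BE1 2%nat ltac:(lia)) (LE1 1%nat ltac:(lia))) by exact Hx.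
      rewrite Z0. ring. }
    unfold e1 in Z. replace (Q1 2%nat xi x) with (Q1 2%nat xi x - Q xi x + Q xi x)%C by ring.
    rewrite Z. ring.
  - intros Hx.
    pose proof (O1d beta cb ub vb xi Hbeta Hub0 Hubc (e1 1%nat) (CE1 1%nat ltac:(lia))
                   (BE1 1%nat ltac:(lia)) (LE1 0%nat ltac:(lia))) as O1.
    fold LP L0 a1 in O1.
    pose proof (O1d beta cb ub vb xi Hbeta Hub0 Hubc (Qt1 1%nat xi)
          (CT1 1%nat ltac:(lia)) (proj2 (HQt1reg 1%nat xi ltac:(lia))) C1) as O2.
    fold LP L0 in O2. rewrite HP1 in O2.
    assert (Z0 : e2 2%nat 0 = 0%C).
    { unfold e2. rewrite U5.
      assert (S : ((Q1 1%nat xi 0 + Qt1 1%nat xi 0 - Q xi 0) * (RtoC ub * (LP - L0)) = 0)%C).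
      { transitivity (RtoC ub * (LP - L0) * e1 1%nat 0 + RtoC ub * (LP - L0) * Qt1 1%nat xi 0)%C.
        - unfold e1. ring.
        - rewrite <- O1, <- O2. ring. }
      apply Cmult_eq0 in S; auto. }
    assert (Z : e2 2%nat x = 0%C).
    { apply (O2e beta cb ub vb xi Hbeta Hub0 Hubc (e2 2%nat) (CE2 2%nat ltac:(lia))
                   (BE2 2%nat ltac:(lia)) (LE2 1%nat ltac:(lia))); auto. }
    unfold e2 in Z. replace (Q2 2%nat xi x) with (Q2 2%nat xi x - Q xi x + Q xi x)%C by ring.
    rewrite Z. ring.
Qed.
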